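(* Let $T>0$, $\alpha>0$, $C_{\alpha,T}=\frac{\alpha}{e^{\alpha T}-1}$, and let $\mathcal{G}_\theta$ be a neural operator (defined in the context) which is assumed to be an exact map from boundary input to boundary output of the closed-loop PDE, i.e. $Y(t)=\mathcal{G}_\theta(U)(t)$ for all $t\in[0,T]$. Assume $U:[0,T]\to\mathbb{R}$ is differentiable, $P,Q$ are differentiable, each activation $\sigma_l$ is a differentiable componentwise map, each kernel $\kappa^{(l)}(t,s)$ and bias $b_l(t)$ is differentiable in $t$ with differentiation under the integral sign permitted, and $\phi:[0,T]\times\mathbb{R}\to\mathbb{R}$ is continuously differentiable. Then: (a) $t\mapsto \mathcal{G}_\theta(U)(t)$ is differentiable and $$\frac{d\mathcal{G}_\theta(U)(t)}{dt}=\Lambda_\theta(t)\,\dot U(t)+\mu_\theta(t),$$ where $$\Lambda_\theta(t)=DQ(v_L(t))\,\Big[\mathrm{Diag}(\sigma_L')W_{L-1}\,\mathrm{Diag}(\sigma_{L-1}')W_{L-2}\cdots\mathrm{Diag}(\sigma_1')W_0\Big]\,DP(U(t)),$$ $$\mu_\theta(t)=DQ(v_L(t))\,\mathrm{Diag}(\sigma_L')\sum_{i=0}^{L-1}\Big[\prod_{j=1}^{i}W_{L-j}\,\mathrm{Diag}(\sigma_{L-j}')\Big]\Big(\int_0^T\frac{\partial\kappa^{(L-1-i)}(t,s)}{\partial t}v_{L-1-i}(s)\,ds+\frac{db_{L-1-i}(t)}{dt}\Big),$$ the product $\prod_{j=1}^{i}$ being ordered left to right in increasing $j$ and equal to the identity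 when $i=0$, and $\sigma_l'$ denoting the vector of derivatives of $\sigma_l$ evaluated at the pre-activation $W_{l-1}v_{l-1}(t)+\int_0^T\kappa^{(l-1)}(t,s)v_{l-1}(s)ds+b_{l-1}(t)$. (b) If for all $t\in[0,T]$ $$\partial_Y\phi(t,\mathcal{G}_\theta(U)(t))\,\frac{d\mathcal{G}_\theta(U)(t)}{dt}+\partial_t\phi(t,\mathcal{G}_\theta(U)(t))+\alpha\,\phi(t,\mathcal{G}_\theta(U)(t))+C_{\alpha,T}\,\phi(0,U(0))\le 0,$$ then the output $Y=\mathcal{G}_\theta(U)$ is boundary feasible over $[0,T]$ within the sublevel set of $\phi$: there exists $t_0\in[0,T]$ such that $\phi(t,Y(t))\le 0$ for all $t\in[t_0,T]$.
   Context: Setting: a closed-loop PDE with state $u:[0,1]^n\times[0,T]\to\mathcal{S}\subseteq\mathbb{R}$, Dirichlet boundary input $U(t)=u(\mathbf{1},t)$, constant initial condition $u(x,0)\equiv U(0)$ (so $Y(0)=U(0)$), and boundary output $Y(t)=u(\mathbf{0},t)$. Neural operator: $\mathcal{G}_\theta$ maps functions $U:[0,T]\to\mathcal{S}$ to functions $Y:[0,T]\to\mathcal{S}$ by $v_0(t)=P(U(t))$ with $P:\mathcal{S}\to\mathbb{R}^{d_{v_0}}$; $v_{l+1}(t)=\sigma_{l+1}\big(W_l v_l(t)+\int_0^T\kappa^{(l)}(t,s)v_l(s)\,ds+b_l(t)\big)$ for $l=0,\dots,L-1$, where $\sigma_{l+1}:\mathbb{R}^{d_{v_{l+1}}}\to\mathbb{R}^{d_{v_{l+1}}}$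 is an activation applied componentwise, $W_l\in\mathbb{R}^{d_{v_{l+1}}\times d_{v_l}}$, $\kappa^{(l)}\in C([0,T]\times[0,T];\mathbb{R}^{d_{v_{l+1}}\times d_{v_l}})$, $b_l\in C([0,T];\mathbb{R}^{d_{v_{l+1}}})$; $\mathcal{G}_\theta(U)(t)=Q(v_L(t))$ with $Q:\mathbb{R}^{d_{v_L}}\to\mathcal{S}$. Here $DP$, $DQ$ denote Jacobians. A function $\phi(t,Y)$ used this way is called a boundary control barrier function (BCBF). *)

(* Defs.v *)
From HB Require Import structures.
From mathcomp Require Import all_boot all_order all_algebra.
From mathcomp Require Import all_classical all_reals all_analysis.
Import Order.TTheory GRing.Theory Num.Theory.
Import numFieldNormedType.Exports.
Local Open Scope classical_set_scope.
Local Open Scope ring_scope.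

(* Layer l (0 <= l < L) maps v_l : [0,T] -> R^{d l} to v_{l+1} : [0,T] -> R^{d (l+1)}
   using W l, kappa l, b l and the scalar activation sigma (l+1) applied
   componentwise.  Fields at indices l >= L are irrelevant. *)
Record neural_op (R : realType) := NeuralOp {
  no_L : nat;
  no_d : nat -> nat;
  no_P : R -> 'cV[R]_(no_d 0);
  no_Q : 'cV[R]_(no_d no_L) -> R;
  no_W : forall l, 'M[R]_(no_d l.+1, no_d l);
  no_kappa : forall l, R -> R -> 'M[R]_(no_d l.+1, no_d l);
  no_b : forall l, R -> 'cV[R]_(no_d l.+1);
  no_sigma : nat -> R -> R }.
Arguments no_L {R}. Arguments no_d {R}. Arguments no_P {R}. Arguments no_Q {R}.
Arguments no_W {R}. Arguments no_kappa {R}. Arguments no_b {R}. Arguments no_sigma {R}.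

Set Implicit Arguments. Unset Strict Implicit. Unset Printing Implicit Defensive.

Section NeuralOperator.
Variables (R : realType) (N : neural_op R) (T : R) (U : R -> R).

Definition vint m (f : R -> 'cV[R]_m) : 'cV[R]_m :=
  \col_i Rintegral (@lebesgue_measure R) `[0, T] (fun s => f s i 0).

Fixpoint no_v (l : nat) : R -> 'cV[R]_(no_d N l) :=
  match l with
  | 0 => fun t => no_P N (U t)
  | l'.+1 => fun t => map_mx (no_sigma N l'.+1)
      (no_W N l' *m no_v l' t + vint (fun s => no_kappa N l' t s *m no_v l' s)
       + no_b N l' t)
  end.

Definition no_G (t : R) : R := no_Q N (no_v (no_L N) t).

Definition no_pre (l : nat) (t : R) : 'cV[R]_(no_d N l.+1) :=
  no_W N l *m no_v l t + vint (fun s => no_kappa N l t s *m no_v l s) + no_b N l t.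

Definition no_Dsig (l : nat) (t : R) : 'M[R]_(no_d N l.+1) :=
  diag_mx (map_mx (derive1 (no_sigma N l.+1)) (no_pre l t))^T.

Definition no_A (l : nat) (t : R) : 'M[R]_(no_d N l.+1, no_d N l) :=
  no_Dsig l t *m no_W N l.

(* no_prod m k t = Diag(sigma_m') W_{m-1} Diag(sigma_{m-1}') W_{m-2} ... Diag(sigma_{k+1}') W_k
   for k <= m, the identity matrix when k = m (conform_mx only serves to type the
   identity 'M_(d m) as 'M_(d m, d k) when m = k; other values are never used). *)
Fixpoint no_prod (m k : nat) (t : R) : 'M[R]_(no_d N m, no_d N k) :=
  match m with
  | 0 => conform_mx 0 (1%:M : 'M[R]_(no_d N 0))
  | m'.+1 => if (k <= m')%N then no_A m' t *m no_prod m' k t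
             else conform_mx 0 (1%:M : 'M[R]_(no_d N m'.+1))
  end.

Definition no_dkappa (l : nat) (t s : R) : 'M[R]_(no_d N l.+1, no_d N l) :=
  derive1 (fun t' => no_kappa N l t' s) t.

Definition no_g (l : nat) (t : R) : 'cV[R]_(no_d N l.+1) :=
  vint (fun s => no_dkappa l t s *m no_v l s) + derive1 (no_b N l) t.

Definition no_Lambda (t : R) : R :=
  'd (no_Q N) (no_v (no_L N) t) (no_prod (no_L N) 0 t *m derive1 (no_P N) (U t)).

(* mu_theta(t) = DQ(v_L(t)) Diag(sigma_L') sum_{i=0}^{L-1} [prod_{j=1}^i W_{L-j} Diag(sigma_{L-j}')] g_{L-1-i}(t),
   written with k = L-1-i:  Diag(sigma_L') [prod_{j=1}^{L-1-k} W_{L-j}Diag(sigma_{L-j}')]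
   = no_prod L (k+1) * Diag(sigma_{k+1}'). *)
Definition no_mu (t : R) : R :=
  'd (no_Q N) (no_v (no_L N) t)
    (\sum_(k < no_L N) (no_prod (no_L N) k.+1 t *m no_Dsig k t *m no_g k t)).

End NeuralOperator.

Definition C_alphaT (R : realType) (alpha T : R) : R := alpha / (expR (alpha * T) - 1).

(* Main.v *)
Require Import Defs.
From HB Require Import structures.
From mathcomp Require Import all_boot all_order all_algebra.
From mathcomp Require Import all_classical all_reals all_analysis.
From mathcomp Require Import ring lra.
Import Order.TTheory GRing.Theory Num.Theory.
Import numFieldNormedType.Exports.
Local Open Scope classical_set_scope.
Local Open Scope ring_scope.


Section helpers.
Context {R : realType}.

Lemma is_derive_mx_entry {m n} {M : R -> 'M[R]_(m,n)} {t : R} {D : 'M[R]_(m,n)} i j :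
  is_derive t 1 M D -> is_derive t 1 (fun x => M x i j) (D i j).
Proof.
move=> [dM <-]; split; first by move/derivable_mxP: dM.
by rewrite derive_mx // mxE.
Qed.

Lemma is_derive_mxP m n (M : R -> 'M[R]_(m,n)) (t : R) (D : 'M[R]_(m,n)) :
  (forall i j, is_derive t 1 (fun x => M x i j) (D i j)) -> is_derive t 1 M D.
Proof.
move=> H; have dM : derivable M t 1.
  by apply/derivable_mxP => i j; case: (H i j).
split => //; rewrite derive_mx //; apply/matrixP => i j; rewrite mxE.
exact: derive_val.
Qed.

Lemma is_derive_mulmx {m n p} (A : 'M[R]_(m,n)) {f : R -> 'M[R]_(n,p)} {t : R} {df} :
  is_derive t 1 f df -> is_derive t 1 (fun x => A *m f x) (A *m df).
Proof.
move=> H; apply: is_derive_mxP => i j; rewrite mxE.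
have -> : (fun x => (A *m f x) i j) = \sum_(k < n) (A i k \*: (fun x => f x k j)).
  by apply/funext => x; rewrite mxE fct_sumE.
apply: is_derive_sum => k; apply: is_deriveZ; exact: is_derive_mx_entry.
Qed.

Lemma is_derive_comp_diff {V W : normedModType R} {f : R -> V} {g : V -> W} {t : R} {df} :
  is_derive t 1 f df -> differentiable g (f t) ->
  is_derive t 1 (g \o f) ('d g (f t) df).
Proof.
move=> [Hf <-] Hg.
have df' : differentiable f t by apply/derivable1_diffP.
have dgf : differentiable (g \o f) t by apply: differentiable_comp.
split; first by apply/derivable1_diffP.
by rewrite deriveE // diff_comp //= [in RHS]deriveE.
Qed.

Lemma is_derive_comp1 {V : normedModType R} {f : R -> R} {g : R -> V} {t : R} {df} :
  is_derive t 1 f df -> derivable g (f t) 1 ->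
  is_derive t 1 (g \o f) (df *: derive1 g (f t)).
Proof.
move=> Hf Hg; have := is_derive_comp_diff Hf (proj1 (derivable1_diffP _ _) Hg).
by rewrite deriv1E.
Qed.

Lemma is_derive_map_mx {m} {s : R -> R} {p : R -> 'cV[R]_m} {t : R} {dp} :
  (forall x, derivable s x 1) -> is_derive t 1 p dp ->
  is_derive t 1 (fun x => map_mx s (p x)) (diag_mx (map_mx (derive1 s) (p t))^T *m dp).
Proof.
move=> Hs Hp; apply: is_derive_mxP => i j.
rewrite mul_diag_mx !mxE (ord1 j).
have -> : (fun x => map_mx s (p x) i 0) = s \o (fun x => p x i 0).
  by apply/funext => x; rewrite mxE.
have := is_derive_comp1 (is_derive_mx_entry i 0 Hp) (Hs (p t i 0)).
by rewrite mulrC.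
Qed.

End helpers.


Lemma no_v_derive (R : realType) (N : neural_op R) (T : R) (U : R -> R) (t : R) :
  derivable U t 1 -> (forall y, derivable (no_P N) y 1) ->
  (forall l x, derivable (no_sigma N l) x 1) ->
  (forall l, (l < no_L N)%N -> derivable (no_b N l) t 1) ->
  (forall l, (l < no_L N)%N ->
     is_derive t 1 (fun t' => vint T (fun s => no_kappa N l t' s *m no_v N T U l s))
                   (vint T (fun s => no_dkappa N l t s *m no_v N T U l s))) ->
  forall l, (l <= no_L N)%N -> is_derive t 1 (no_v N T U l)
     (derive1 U t *: (no_prod N T U l 0 t *m derive1 (no_P N) (U t))
      + \sum_(k < l) (no_prod N T U l k.+1 t *m no_Dsig N T U k t *m no_g N T U k t)).
Proof.
move=> dU dP dsig db dk; elim => [|l IH] Hl.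
  have -> : no_v N T U 0 = no_P N \o U by [].
  apply: is_derive_eq; first exact: (is_derive_comp1 (derivableP dU) (dP (U t))).
  by rewrite big_ord0 addr0 /= conform_mx_id mul1mx !derive1E.
have Hl' : (l < no_L N)%N by [].
have IHl := IH (ltnW Hl).
have Hpre : is_derive t 1 (no_pre N T U l)
   (no_W N l *m (derive1 U t *: (no_prod N T U l 0 t *m derive1 (no_P N) (U t))
      + \sum_(k < l) (no_prod N T U l k.+1 t *m no_Dsig N T U k t *m no_g N T U k t))
    + no_g N T U l t).
  have -> : no_pre N T U l = (fun x => no_W N l *m no_v N T U l x)
     + (fun t' => vint T (fun s => no_kappa N l t' s *m no_v N T U l s)) + no_b N l.
    by apply/funext => x.
  rewrite /no_g -addrA; apply: is_deriveD; first exact: is_derive_mulmx.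
  apply: is_deriveD; first exact: dk.
  by rewrite derive1E; apply: derivableP; apply: db.
have -> : no_v N T U l.+1 = fun x => map_mx (no_sigma N l.+1) (no_pre N T U l x) by [].
apply: is_derive_eq; first exact: (is_derive_map_mx (dsig l.+1) Hpre).
rewrite -/(no_Dsig N T U l t) big_ord_recr /= ltnn conform_mx_id mul1mx.
rewrite (eq_bigr (fun i : 'I_l => no_A N T U l t *m (no_prod N T U l i.+1 t *m no_Dsig N T U i t *m no_g N T U i t))); last first.
  by move=> i _; rewrite (ltn_ord i) !mulmxA.
rewrite -mulmx_sumr /no_A.
rewrite mulmxDr mulmxA mulmxDr scalemxAr -!mulmxA addrA.
by rewrite !scalemxAr.
Qed.


Section B.
Context {R : realType}.

Lemma within2_eps (A : set (R * R)) (f : R * R -> R) (p : R * R) (e : R) :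
  {within A, continuous f} -> A p -> 0 < e ->
  exists2 d, 0 < d & forall q, A q -> `|p.1 - q.1| < d -> `|p.2 - q.2| < d ->
    `|f p - f q| < e.
Proof.
move=> /subspace_continuousP Hc Ap e0.
have H : \forall t \near within A (nbhs p), `|f p - f t| < e.
  exact: (cvgrPdist_lt _ _).1 (Hc p Ap) e e0.
move: H; rewrite near_withinE -nbhs_nearE => H.
have : nbhs p (fun t : R * R => A t -> `|f p - f t| < e) by exact: H.
case/nbhs_ballP => d /= d0 Hd.
exists d => // q Aq h1 h2.
apply: (Hd q) Aq; split; rewrite -ball_normE /ball_ //.
Qed.

Lemma mvt_bound (f : R -> R) (x y M : R) :
  (forall z, derivable f z 1) ->
  (forall z, `|z - x| <= `|y - x| -> `|derive1 f z| <= M) ->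
  `|f y - f x| <= M * `|y - x|.
Proof.
move=> df HM.
have cf : forall a b, {within `[a, b], continuous f}.
  move=> a b; apply: continuous_subspaceT => z.
  by apply: differentiable_continuous; apply/derivable1_diffP.
have dd : forall a b z : R, z \in `]a, b[ -> is_derive z 1 f (derive1 f z).
  by move=> a b z _; rewrite derive1E; apply: derivableP.
case: (leP x y) => xy.
  have [c cxy ->] := MVT_segment xy (dd x y) (cf x y).
  rewrite normrM ler_wpM2r //; apply: HM.
  move: cxy; rewrite in_itv /= => /andP[h1 h2].
  by rewrite !ger0_norm ?subr_ge0 // lerD2r.
have [c cxy E] := MVT_segment (ltW xy) (dd y x) (cf y x).
rewrite -normrN opprB E normrM -[`|y - x|]normrN opprB ler_wpM2r //; apply: HM.
move: cxy; rewrite in_itv /= => /andP[h1 h2].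
rewrite -normrN opprB -[`|y - x|]normrN opprB.
by rewrite !ger0_norm ?subr_ge0 ?(ltW xy) // lerD2l lerN2.
Qed.

Lemma is_derive_mulc (py z : R) : is_derive z 1 (fun x : R => py * x) py.
Proof.
have H := is_deriveZ py (is_derive_id z 1).
have -> : (fun x : R => py * x) = py \*: id by [].
apply: (is_derive_eq H); by rewrite [_%:A]mulr1.
Qed.

Lemma key_bound (phi : R -> R -> R) (a b t y0 e : R) :
  t \in `[a, b] -> (forall s y, s \in `[a, b] -> derivable (phi s) y 1) ->
  {within `[a, b] `*` setT, continuous (fun p : R * R => derive1 (phi p.1) p.2)} ->
  0 < e ->
  exists2 d, 0 < d & forall s y, s \in `[a, b] -> `|s - t| < d -> `|y - y0| < d ->
     `|phi s y - phi s y0 - derive1 (phi t) y0 * (y - y0)| <= e * `|y - y0|.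
Proof.
move=> ta dphi Hc e0.
have [d d0 Hd] := @within2_eps _ _ (t, y0) _ Hc (conj ta I) e0.
exists d => // s y sa st yy.
set py := derive1 (phi t) y0.
pose psi : R -> R := (phi s : R -> R) - (fun x : R => py * x).
have Epsi : forall z, psi z = phi s z - py * z by move=> z.
have dpsi : forall z : R, is_derive z 1 psi (derive1 (phi s) z - py).
  move=> z; apply: is_derive_eq.
    apply: is_deriveB; exact: derivableP (dphi s z sa).
  by rewrite derive1E [_%:A]mulr1.
have -> : phi s y - phi s y0 - py * (y - y0) = psi y - psi y0.
  by rewrite !Epsi mulrBr opprB; lra.
apply: mvt_bound; first by move=> z; case: (dpsi z).
move=> z zy; rewrite derive1E (@derive_val _ _ _ _ _ _ _ (dpsi z)).
rewrite distrC; apply: ltW; apply: (Hd (s, z)) => //=.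
  by rewrite distrC.
by rewrite distrC (le_lt_trans zy).
Qed.

Lemma chain2 (phi : R -> R -> R) (G : R -> R) (a b t : R) :
  t \in `]a, b[ -> derivable G t 1 ->
  derivable (fun s => phi s (G t)) t 1 ->
  (forall s y, s \in `[a, b] -> derivable (phi s) y 1) ->
  {within `[a, b] `*` setT, continuous (fun p : R * R => derive1 (phi p.1) p.2)} ->
  is_derive t 1 (fun s => phi s (G s))
    (derive1 (phi t) (G t) * derive1 G t + derive1 (fun s => phi s (G t)) t).
Proof.
move=> tab dG dphit dphi Hc.
have tab' : t \in `[a, b] by apply: subset_itv_oo_cc.
move: tab; rewrite in_itv /= => /andP[ta tb].
set y0 := G t; set py := derive1 (phi t) y0.
pose F1 := fun s => phi s (G s) - phi s y0 - py * (G s - y0).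
have F1t : F1 t = 0 by rewrite /F1 /y0 !subrr mulr0 subr0.
have HF1 : is_derive t 1 F1 0.
  have Hq : (fun h => h^-1 *: ((F1 \o shift t) (h *: 1) - F1 t)) @ 0^' --> (0:R).
    apply/cvgrPdist_le => eps eps0.
    move: (dG) => /cvg_ex [l Hl].
    set M := `|l| + 1.
    have M0 : 0 < M by rewrite /M ltr_wpDl.
    have [d d0 Hd] := @key_bound phi a b t y0 (eps / M) tab' dphi Hc (divr_gt0 eps0 M0).
    have qG := (cvgrPdist_le _ _).1 Hl 1 ltr01.
    pose r := Num.min (Num.min d (d / M)) (Num.min (t - a) (b - t)).
    have r0 : 0 < r by rewrite /r !lt_min d0 divr_gt0 // !subr_gt0 ta tb.
    near=> h.
    have hn0 : h != 0 by near: h; exact: nbhs_dnbhs_neq.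
    have hr : `|h| < r by near: h; exact: dnbhs0_lt.
    have hq : `|l - h^-1 *: ((G \o shift t) (h *: 1) - G t)| <= 1 by near: h; exact: qG.
    move: hq; rewrite /= ![_%:A]mulr1 => hq.
    rewrite F1t subr0 sub0r normrN normrZ normfV.
    move: hr; rewrite /r !lt_min => /andP[/andP[hd hdM] /andP[hta hbt]].
    have sab : h + t \in `[a, b].
      move: hta hbt; rewrite !ltr_norml in_itv /= => /andP[h1 _] /andP[_ h2].
      by apply/andP; split; lra.
    have hs : `|h + t - t| < d by rewrite addrK.
    set D := G (h + t) - G t.
    have HqD : `|h^-1 *: D| <= M.
      have E : h^-1 *: D = l - (l - h^-1 *: D) by rewrite opprB addrC subrK.
      rewrite E (le_trans (ler_normB _ _)) // lerD2l.
      exact: hq.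
    have HD : `|D| <= `|h| * M.
      have -> : D = h * (h^-1 *: D) by rewrite /GRing.scale /= mulVKf.
      by rewrite normrM ler_wpM2l.
    have HDd : `|G (h + t) - y0| < d.
      by rewrite (le_lt_trans HD) // -ltr_pdivlMr.
    have := Hd (h + t) (G (h + t)) sab hs HDd.
    rewrite -/D => H1.
    rewrite mulrC ler_pdivrMr ?normr_gt0 //.
    apply: (le_trans H1).
    have -> : eps * `|h| = eps / M * (`|h| * M) by rewrite mulrCA divfK ?gt_eqF // mulrC.
    by apply: ler_wpM2l => //; rewrite divr_ge0 // ltW.
  split; first exact: (cvgP _ Hq).
  by apply: cvg_lim.
have EF : (fun s => phi s (G s)) =
    (F1 + py \*: (G - cst y0)) + (fun s => phi s y0).
  apply/funext => s.
  change (phi s (G s) = (phi s (G s) - phi s y0 - py * (G s - y0))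
     + py * (G s - y0) + phi s y0); ring.
rewrite EF; apply: is_derive_eq.
  apply: is_deriveD; last exact: derivableP dphit.
  apply: is_deriveD.
  apply: is_deriveZ; apply: is_deriveB; exact: derivableP dG.
rewrite add0r subr0 !derive1E.
by [].
Unshelve. all: by end_near.
Qed.

Lemma cont2 (phi : R -> R -> R) (G : R -> R) (a b t : R) :
  t \in `[a, b] -> derivable G t 1 -> derivable (fun s => phi s (G t)) t 1 ->
  (forall s y, s \in `[a, b] -> derivable (phi s) y 1) ->
  {within `[a, b] `*` setT, continuous (fun p : R * R => derive1 (phi p.1) p.2)} ->
  (fun s => phi s (G s)) @ within [set` `[a, b]] (nbhs t) --> phi t (G t).
Proof.
move=> tab dG dphit dphi Hc.
set y0 := G t; set py := derive1 (phi t) y0.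
have cG : G @ t --> y0.
  exact: differentiable_continuous (proj1 (derivable1_diffP _ _) dG).
have cP : (fun s => phi s y0) @ t --> phi t y0.
  exact: differentiable_continuous (proj1 (derivable1_diffP _ _) dphit).
have [d d0 Hd] := @key_bound phi a b t y0 1 tab dphi Hc ltr01.
set L := `|py| + 1.
have L0 : 0 < L by rewrite /L ltr_wpDl.
apply/cvgrPdist_lt => e e0.
have e20 : 0 < e / 2 by rewrite divr_gt0.
have m0 : 0 < Num.min d (e / 2 / L) by rewrite lt_min d0 divr_gt0.
have hG := (cvgrPdist_lt _ _).1 cG (Num.min d (e / 2 / L)) m0.
have hP := (cvgrPdist_lt _ _).1 cP (e / 2) e20.
have hT : \forall s \near t, `|t - s| < d.
  exact: (cvgrPdist_lt _ _).1 (@cvg_id _ (nbhs t)) d d0.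
rewrite near_withinE; near=> s => sA.
have h1 : `|y0 - G s| < Num.min d (e / 2 / L) by near: s; exact: hG.
have h2 : `|phi t y0 - phi s y0| < e / 2 by near: s; exact: hP.
have h3 : `|t - s| < d by near: s; exact: hT.
move: h1; rewrite lt_min => /andP[h1 h1'].
have h3' : `|s - t| < d by rewrite distrC.
have h1'' : `|G s - y0| < d by rewrite distrC.
have k := Hd s (G s) sA h3' h1''.
rewrite mul1r in k.
have k2 : `|phi s (G s) - phi s y0| <= L * `|G s - y0|.
  have -> : phi s (G s) - phi s y0 =
    (phi s (G s) - phi s y0 - py * (G s - y0)) + py * (G s - y0) by ring.
  rewrite (le_trans (ler_normD _ _)) // normrM /L mulrDl mul1r addrC.
  by rewrite lerD2l.
have k3 : L * `|G s - y0| < e / 2.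
  by rewrite -ltr_pdivlMl // mulrC distrC.
have -> : phi t y0 - phi s (G s) = (phi t y0 - phi s y0) - (phi s (G s) - phi s y0).
  by ring.
have := ler_normB (phi t y0 - phi s y0) (phi s (G s) - phi s y0).
lra.
Unshelve. all: by end_near.
Qed.

End B.


Theorem theorem2 (R : realType) (T alpha : R) (N : neural_op R)
    (n : nat) (u : 'rV[R]_n -> R -> R) (U Y : R -> R) (phi : R -> R -> R) :
  0 < T -> 0 < alpha ->
  (* closed-loop PDE: Dirichlet input at x = 1, output at x = 0, constant initial state *)
  (forall t, t \in `[0, T] -> U t = u (const_mx 1) t) ->
  (forall t, t \in `[0, T] -> Y t = u 0 t) ->
  (forall x : 'rV[R]_n, (forall i, 0 <= x 0 i <= 1) -> u x 0 = U 0) ->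
  (* G_theta is an exact input-output map *)
  (forall t, t \in `[0, T] -> Y t = no_G N T U t) ->
  (* regularity assumptions *)
  (forall t, t \in `[0, T] -> derivable U t 1) ->
  (forall y : R, derivable (no_P N) y 1) ->
  (forall x, differentiable (no_Q N) x) ->
  (forall l x, derivable (no_sigma N l) x 1) ->
  (forall l, (l < no_L N)%N ->
     {within `[0, T] `*` `[0, T], continuous (fun p : R * R => no_kappa N l p.1 p.2)}) ->
  (forall l, (l < no_L N)%N -> {within `[0, T], continuous (no_b N l)}) ->
  (forall l t s, (l < no_L N)%N -> t \in `[0, T] -> s \in `[0, T] ->
     derivable (fun t' => no_kappa N l t' s) t 1) ->
  (forall l t, (l < no_L N)%N -> t \in `[0, T] -> derivable (no_b N l) t 1) ->
  (* differentiation under the integral sign is permitted *)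
  (forall l t, (l < no_L N)%N -> t \in `[0, T] ->
     is_derive t 1 (fun t' => vint T (fun s => no_kappa N l t' s *m no_v N T U l s))
                   (vint T (fun s => no_dkappa N l t s *m no_v N T U l s))) ->
  (* phi is continuously differentiable on [0,T] x R *)
  (forall t y, t \in `[0, T] -> derivable (fun t' => phi t' y) t 1) ->
  (forall t y, t \in `[0, T] -> derivable (phi t) y 1) ->
  {within `[0, T] `*` setT,
     continuous (fun p : R * R => derive1 (fun t' => phi t' p.2) p.1)} ->
  {within `[0, T] `*` setT,
     continuous (fun p : R * R => derive1 (phi p.1) p.2)} ->
  (* (a) *)
  (forall t, t \in `[0, T] ->
     derivable (no_G N T U) t 1 /\
     derive1 (no_G N T U) t = no_Lambda N T U t * derive1 U t + no_mu N T U t)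
  /\
  (* (b) *)
  ((forall t, t \in `[0, T] ->
      derive1 (phi t) (no_G N T U t) * derive1 (no_G N T U) t
      + derive1 (fun t' => phi t' (no_G N T U t)) t
      + alpha * phi t (no_G N T U t) + C_alphaT alpha T * phi 0 (U 0) <= 0) ->
   exists t0, t0 \in `[0, T] /\ forall t, t \in `[t0, T] -> phi t (Y t) <= 0).
Proof.
move=> T0 a0 HU HY Hu0 HG dU dP dQ dsig _ _ dkap db dint dphit dphiy Hct Hcy.
have partA : forall t, t \in `[0, T] -> is_derive t 1 (no_G N T U)
    (no_Lambda N T U t * derive1 U t + no_mu N T U t).
  move=> t tT.
  have Hv := @no_v_derive R N T U t (dU t tT) dP dsig (fun l hl => db l t hl tT)
    (fun l hl => dint l t hl tT) (no_L N) (leqnn _).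
  have -> : no_G N T U = no_Q N \o no_v N T U (no_L N) by [].
  apply: is_derive_eq; first exact: (is_derive_comp_diff Hv (dQ _)).
  by rewrite linearD linearZ /= /no_Lambda /no_mu mulrC.
split.
  move=> t tT; have [H1 H2] := partA t tT; split => //.
  by rewrite derive1E.
move=> Hb.
set G := no_G N T U in partA Hb HG *.
have dG : forall t, t \in `[0, T] -> derivable G t 1 by move=> t /partA [].
have T0in : (0:R) \in `[0, T] by rewrite in_itv /= lexx ltW.
have TTin : T \in `[0, T] by rewrite in_itv /= lexx ltW.
have G0 : G 0 = U 0.
  rewrite -HG // HY // Hu0 //.
  by move=> i; rewrite mxE lexx ler01.
set h0 := phi 0 (U 0).
pose F := fun s => phi s (G s).
have F0 : F 0 = h0 by rewrite /F G0.
have Fc : {within `[0, T], continuous F}.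
  apply/subspace_continuousP => t tA.
  have H := @cont2 R phi G 0 T t tA (dG t tA) (dphit t (G t) tA) dphiy Hcy.
  exact H.
set E := expR (alpha * T).
have E1 : 1 < E by rewrite /E expR_gt1 mulr_gt0.
pose c := C_alphaT alpha T * h0 / alpha.
have cE : c * (E - 1) = h0.
  have hE : E - 1 != 0 by rewrite gt_eqF // subr_gt0.
  have ha : alpha != 0 by rewrite gt_eqF.
  rewrite /c /C_alphaT -/E.
  by rewrite mulrAC [X in X / alpha]mulrAC divfK // mulrC mulKf.
pose K := (fun s : R => expR (alpha * s)) * (F + cst c).
have Kc : {within `[0, T], continuous K}.
  apply/subspace_continuousP => t tA.
  apply: cvgM; last first.
    apply: cvgD; last exact: cvg_cst.
    by move/subspace_continuousP: Fc; apply.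
  apply: cvg_within_filter.
  apply: continuous_comp; last exact: continuous_expR.
  have [dm _] := is_derive_mulc alpha t.
  exact: differentiable_continuous (proj1 (derivable1_diffP _ _) dm).
have Kd : forall t, t \in `]0, T[ -> is_derive t 1 K
    (expR (alpha * t) * (derive1 (phi t) (G t) * derive1 G t
      + derive1 (fun s => phi s (G t)) t + alpha * F t + C_alphaT alpha T * h0)).
  move=> t tA.
  have tA' : t \in `[0, T] by apply: subset_itv_oo_cc.
  have HF := @chain2 R phi G 0 T t tA (dG t tA') (dphit t (G t) tA') dphiy Hcy.
  have He : is_derive t 1 (fun s : R => expR (alpha * s)) (alpha *: expR (alpha * t)).
    have dE : derivable (@expR R) (alpha * t) 1 by exact: derivable_expR.
    have H := is_derive_comp1 (is_derive_mulc alpha t) dE.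
    apply: (is_derive_eq H).
    rewrite derive1E.
    congr (_ *: _); exact: derive_val.
  have HFc : is_derive t 1 (F + cst c) (derive1 (phi t) (G t) * derive1 G t
      + derive1 (fun s => phi s (G t)) t + 0).
    by apply: is_deriveD.
  have HK := is_deriveM He HFc.
  apply: (is_derive_eq HK).
  have Cc : C_alphaT alpha T * h0 = alpha * c.
    by rewrite /c [RHS]mulrC divfK // gt_eqF.
  rewrite Cc addr0.
  change (expR (alpha * t) * (derive1 (phi t) (G t) * derive1 G t
      + derive1 (fun s => phi s (G t)) t) + (F t + c) * (alpha * expR (alpha * t)) =
    expR (alpha * t) * (derive1 (phi t) (G t) * derive1 G t
      + derive1 (fun s => phi s (G t)) t + alpha * F t + alpha * c)).
  ring.
have KT : K T <= K 0.
  apply: (@ler0_derive1_le_cc _ K 0 T) => //.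
  - by move=> t /Kd [].
  - move=> t tA; rewrite derive1E (@derive_val _ _ _ _ _ _ _ (Kd t tA)).
    rewrite pmulr_rle0 ?expR_gt0 //.
    exact: Hb (subset_itv_oo_cc tA).
  - by rewrite ltW.
have FT : F T <= 0.
  have KT' : expR (alpha * T) * (F T + c) <= expR (alpha * 0) * (F 0 + c) := KT.
  move: KT'; rewrite mulr0 expR0 mul1r F0 -/E => KT2.
  have EF : E * F T <= 0 by nra.
  by move: EF; rewrite pmulr_rle0 // (lt_trans ltr01 E1).
exists T; split => // t; rewrite in_itv /= => /andP[h1 h2].
have -> : t = T by apply/le_anti; rewrite h1 h2.
by rewrite HG.
Qed.
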